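(* Let $D:\mathbb R^2\setminus\{0\}\to\mathbb R$ be nonnegative, bounded and continuously differentiable, and consider $\ddot x+D(x)\dot x=-x/|x|^3$, $x\in\mathbb R^2\setminus\{0\}$. Let $r_A,r_B,T>0$. There exists $M>0$ (depending only on $r_A,r_B,T$) such that every solution $x:[-T,0]\to\mathbb R^2\setminus\{0\}$ of this equation with $|x(-T)|=r_A$ and $|x(0)|=r_B$ satisfies $|\dot x(0)|<M$.
   Context: Solutions are twice continuously differentiable and avoid the origin. *)

(* Defs.v *)
From Stdlib Require Import Reals.
From Coquelicot Require Import Coquelicot.
Open Scope R_scope.

Definition norm2 (a b : R) : R := sqrt (a ^ 2 + b ^ 2).

Definition nonzero2 (a b : R) : Prop := ~ (a = 0 /\ b = 0).

Definition damping_nonneg (D : R -> R -> R) : Prop :=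
  forall a b, nonzero2 a b -> 0 <= D a b.

Definition damping_bounded (D : R -> R -> R) : Prop :=
  exists K, forall a b, nonzero2 a b -> Rabs (D a b) <= K.

Definition C1_punctured (D : R -> R -> R) : Prop :=
  exists Dx Dy : R -> R -> R,
    forall a b, nonzero2 a b ->
      differentiable_pt_lim D a b (Dx a b) (Dy a b) /\
      continuity_2d_pt Dx a b /\ continuity_2d_pt Dy a b.

Definition C2 (f : R -> R) : Prop :=
  forall t, ex_derive f t /\ ex_derive (Derive f) t /\
            continuous (Derive (Derive f)) t.

Definition is_solution (D : R -> R -> R) (T : R) (x1 x2 : R -> R) : Prop :=
  C2 x1 /\ C2 x2 /\
  forall t, -T <= t <= 0 ->
    nonzero2 (x1 t) (x2 t) /\
    Derive (Derive x1) t + D (x1 t) (x2 t) * Derive x1 t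
      = - x1 t / (norm2 (x1 t) (x2 t)) ^ 3 /\
    Derive (Derive x2) t + D (x1 t) (x2 t) * Derive x2 t
      = - x2 t / (norm2 (x1 t) (x2 t)) ^ 3.

(* Main.v *)
Require Import Defs.
From Stdlib Require Import Reals.
From Coquelicot Require Import Coquelicot.
From Stdlib Require Import Lra.
Open Scope R_scope.

Lemma Ederiv (x1 x2 : R -> R) (Dc : R) t :
  ex_derive x1 t -> ex_derive x2 t -> ex_derive (Derive x1) t -> ex_derive (Derive x2) t ->
  0 < x1 t ^2 + x2 t ^2 ->
  Derive (Derive x1) t + Dc * Derive x1 t = - x1 t / (sqrt (x1 t ^2 + x2 t^2)) ^ 3 ->
  Derive (Derive x2) t + Dc * Derive x2 t = - x2 t / (sqrt (x1 t ^2 + x2 t^2)) ^ 3 ->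
  is_derive (fun t => (Derive x1 t ^2 + Derive x2 t ^2)/2 - 1 / sqrt (x1 t ^2 + x2 t ^2)) t
    (- Dc * (Derive x1 t ^2 + Derive x2 t ^2)).
Proof.
intros h1 h2 h3 h4 hr e1 e2.
assert (hq : 0 < sqrt (x1 t ^2 + x2 t^2)) by (apply sqrt_lt_R0; lra).
auto_derive.
- repeat split; auto; try (apply Rgt_not_eq; apply Rlt_gt); try nra.
  apply sqrt_lt_R0; nra.
- change (Derive (fun x => x1 x) t) with (Derive x1 t).
  change (Derive (fun x => x2 x) t) with (Derive x2 t).
  change (Derive (fun x => Derive x1 x) t) with (Derive (Derive x1) t).
  change (Derive (fun x => Derive x2 x) t) with (Derive (Derive x2) t).
  replace (x1 t * (x1 t * 1) + x2 t * (x2 t * 1)) with (x1 t ^2 + x2 t^2) by ring.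
  set (q := sqrt (x1 t ^2 + x2 t^2)) in *.
  replace (Derive (Derive x1) t) with (- x1 t / q ^ 3 - Dc * Derive x1 t) by lra.
  replace (Derive (Derive x2) t) with (- x2 t / q ^ 3 - Dc * Derive x2 t) by lra.
  field. lra.
Qed.

Lemma Wderiv (x1 x2 : R -> R) (Dc : R) t :
  ex_derive x1 t -> ex_derive x2 t -> ex_derive (Derive x1) t -> ex_derive (Derive x2) t ->
  0 < x1 t ^2 + x2 t ^2 -> 0 < Derive x1 t ^2 + Derive x2 t ^2 ->
  Derive (Derive x1) t + Dc * Derive x1 t = - x1 t / (sqrt (x1 t ^2 + x2 t^2)) ^ 3 ->
  Derive (Derive x2) t + Dc * Derive x2 t = - x2 t / (sqrt (x1 t ^2 + x2 t^2)) ^ 3 ->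
  let q := sqrt (x1 t ^2 + x2 t^2) in
  let s := Derive x1 t ^2 + Derive x2 t ^2 in
  let S := sqrt s in
  let p := x1 t * Derive x1 t + x2 t * Derive x2 t in
  is_derive (fun t => (x1 t * Derive x1 t + x2 t * Derive x2 t) / sqrt (Derive x1 t ^2 + Derive x2 t ^2)) t
    ((s - Dc * p - (x1 t ^2 + x2 t^2) / q ^ 3) / S + p * (Dc * s + p / q ^ 3) / (S * S * S)).
Proof.
intros h1 h2 h3 h4 hr hs e1 e2 q s S p.
assert (hq : 0 < q) by (apply sqrt_lt_R0; unfold q; lra).
assert (hS : 0 < S) by (apply sqrt_lt_R0; unfold s; lra).
auto_derive.
- repeat split; auto; try (apply Rgt_not_eq; apply Rlt_gt); try nra.
  apply sqrt_lt_R0; nra.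
- change (Derive (fun x => x1 x) t) with (Derive x1 t).
  change (Derive (fun x => x2 x) t) with (Derive x2 t).
  change (Derive (fun x => Derive x1 x) t) with (Derive (Derive x1) t).
  change (Derive (fun x => Derive x2 x) t) with (Derive (Derive x2) t).
  replace (Derive x1 t * (Derive x1 t * 1) + Derive x2 t * (Derive x2 t * 1)) with s by (unfold s; ring).
  fold S.
  replace (Derive (Derive x1) t) with (- x1 t / q ^ 3 - Dc * Derive x1 t) by (unfold q; lra).
  replace (Derive (Derive x2) t) with (- x2 t / q ^ 3 - Dc * Derive x2 t) by (unfold q; lra).
  unfold p, s. field. lra.
Qed.

Lemma CS_bound (a b c d : R) : 0 < c ^ 2 + d ^ 2 ->
  Rabs ((a * c + b * d) / sqrt (c ^ 2 + d ^ 2)) <= sqrt (a ^ 2 + b ^ 2).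
Proof.
intros hs.
assert (hS : 0 < sqrt (c ^ 2 + d ^ 2)) by (apply sqrt_lt_R0; lra).
assert (hq : 0 <= sqrt (a ^ 2 + b ^ 2)) by apply sqrt_pos.
assert (eS : sqrt (c ^ 2 + d ^ 2) * sqrt (c ^ 2 + d ^ 2) = c^2 + d^2) by (apply sqrt_sqrt; lra).
assert (eq : sqrt (a ^ 2 + b ^ 2) * sqrt (a ^ 2 + b ^ 2) = a^2 + b^2) by (apply sqrt_sqrt; nra).
assert (H : Rabs (a * c + b * d) <= sqrt (a ^ 2 + b ^ 2) * sqrt (c ^ 2 + d ^ 2)).
{ rewrite <- (Rabs_pos_eq (sqrt (a ^ 2 + b ^ 2) * sqrt (c ^ 2 + d ^ 2))) by nra.
  apply Rsqr_le_abs_0. unfold Rsqr.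
  replace (sqrt (a ^ 2 + b ^ 2) * sqrt (c ^ 2 + d ^ 2) * (sqrt (a ^ 2 + b ^ 2) * sqrt (c ^ 2 + d ^ 2)))
   with ((sqrt (a ^ 2 + b ^ 2) * sqrt (a ^ 2 + b ^ 2)) * (sqrt (c ^ 2 + d ^ 2) * sqrt (c ^ 2 + d ^ 2))) by ring.
  rewrite eS, eq. pose proof (pow2_ge_0 (a*d-b*c)). nra. }
unfold Rdiv. rewrite Rabs_mult, Rabs_inv, (Rabs_pos_eq (sqrt _)) by lra.
apply (Rmult_le_reg_r (sqrt (c ^ 2 + d ^ 2))); auto.
field_simplify; lra.
Qed.

Lemma df_bound (Dc p q S r2 s : R): 0<q -> 0<S -> q*q = r2 -> S*S = s -> 2/q <= s ->
  (s - Dc*p - r2/q^3)/S + p*(Dc*s + p/q^3)/(S*S*S) >= S/2.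
Proof.
intros hq hS e1 e2 h. subst r2 s.
replace ((S * S - Dc * p - q * q / q ^ 3) / S + p * (Dc * (S * S) + p / q ^ 3) / (S * S * S))
  with (S - (1/q)/S + p^2/(q^3*S^3)) by (field; lra).
assert (h1 : 1/q <= S*S/2) by (unfold Rdiv in *; lra).
assert (h2 : (1/q)/S <= (S*S/2)/S).
{ unfold Rdiv at 1 3. apply Rmult_le_compat_r; [left; apply Rinv_0_lt_compat|]; lra. }
replace ((S*S/2)/S) with (S/2) in h2 by (field; lra).
assert (h3 : 0 <= p^2/(q^3*S^3)).
{ unfold Rdiv. apply Rmult_le_pos; [apply pow2_ge_0| left; apply Rinv_0_lt_compat].
  apply Rmult_lt_0_compat; apply pow_lt; lra. }
lra.
Qed.

Theorem proposition4p2 (rA rB T : R) (hrA : 0 < rA) (hrB : 0 < rB) (hT : 0 < T) :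
  exists M : R, 0 < M /\
    forall (D : R -> R -> R),
      damping_nonneg D -> damping_bounded D -> C1_punctured D ->
      forall x1 x2 : R -> R,
        is_solution D T x1 x2 ->
        norm2 (x1 (- T)) (x2 (- T)) = rA ->
        norm2 (x1 0) (x2 0) = rB ->
        norm2 (Derive x1 0) (Derive x2 0) < M.
Proof.
set (a := 2 / rB). set (b := 2 * (rA + rB) / T).
assert (ha : 0 < a) by (unfold a; apply Rdiv_lt_0_compat; lra).
assert (hb : 0 < b) by (unfold b; apply Rdiv_lt_0_compat; lra).
exists (1 + a + b). split; [lra|].
intros D HD _ _ x1 x2 [C1 [C2' Hsol]] HA HB.
apply Rnot_le_lt; intro HV.
unfold norm2 in *.
set (r2 := fun t => x1 t ^ 2 + x2 t ^ 2).
set (s := fun t => Derive x1 t ^ 2 + Derive x2 t ^ 2).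
set (E := fun t => (Derive x1 t ^2 + Derive x2 t ^2)/2 - 1 / sqrt (x1 t ^2 + x2 t ^2)).
set (W := fun t => (x1 t * Derive x1 t + x2 t * Derive x2 t) / sqrt (Derive x1 t ^2 + Derive x2 t ^2)).
assert (Hr : forall t, -T <= t <= 0 -> 0 < x1 t ^ 2 + x2 t ^ 2).
{ intros t ht. destruct (Hsol t ht) as [nz _]. unfold nonzero2 in nz.
  destruct (Req_dec (x1 t) 0) as [e|n1].
  - assert (n2 : x2 t <> 0) by tauto. rewrite e. apply Rsqr_pos_lt in n2. unfold Rsqr in n2. nra.
  - apply Rsqr_pos_lt in n1. unfold Rsqr in n1. nra. }
assert (Hder : forall t, ex_derive x1 t /\ ex_derive x2 t /\ ex_derive (Derive x1) t /\ ex_derive (Derive x2) t).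
{ intro t. destruct (C1 t) as [? [? _]]. destruct (C2' t) as [? [? _]]. auto. }
assert (hs0 : a + b ^ 2 < s 0).
{ assert (e : sqrt (s 0) * sqrt (s 0) = s 0) by (apply sqrt_sqrt; unfold s; nra).
  unfold s in e |- *. nra. }
assert (HE : forall t, -T <= t <= 0 -> E 0 <= E t).
{ intros t ht. destruct (Req_dec t 0) as [->|nt]; [lra|].
  destruct (MVT_gen E t 0 (fun c => - D (x1 c) (x2 c) * (Derive x1 c ^ 2 + Derive x2 c ^ 2))) as [c [hc ec]].
  - intros y hy. rewrite Rmin_left, Rmax_right in hy by lra.
    destruct (Hder y) as [? [? [? ?]]]. destruct (Hsol y ltac:(lra)) as [_ [e1 e2]].
    apply Ederiv; auto. apply Hr; lra.
  - intros y hy. rewrite Rmin_left, Rmax_right in hy by lra.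
    destruct (Hder y) as [? [? [? ?]]]. destruct (Hsol y ltac:(lra)) as [nz [e1 e2]].
    apply continuity_pt_filterlim. apply (@ex_derive_continuous R_AbsRing R_NormedModule).
    eexists. apply Ederiv; eauto. apply Hr; lra.
  - rewrite Rmin_left, Rmax_right in hc by lra.
    destruct (Hsol c ltac:(lra)) as [nz _].
    pose proof (HD _ _ nz). pose proof (pow2_ge_0 (Derive x1 c)). pose proof (pow2_ge_0 (Derive x2 c)).
    assert (0 <= D (x1 c) (x2 c) * (Derive x1 c ^ 2 + Derive x2 c ^ 2)) by (apply Rmult_le_pos; lra).
    nra. }
assert (Hst : forall t, -T <= t <= 0 -> b ^ 2 + 2 / sqrt (x1 t ^ 2 + x2 t ^ 2) < s t).
{ intros t ht. pose proof (HE t ht). unfold E in H. rewrite HB in H. unfold s.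
  unfold a in hs0. unfold s in hs0. lra. }
destruct (MVT_gen W (-T) 0 (fun c =>
   let q := sqrt (x1 c ^2 + x2 c^2) in
   let s := Derive x1 c ^2 + Derive x2 c ^2 in
   let S := sqrt s in
   let p := x1 c * Derive x1 c + x2 c * Derive x2 c in
   (s - D (x1 c) (x2 c) * p - (x1 c ^2 + x2 c^2) / q ^ 3) / S + p * (D (x1 c) (x2 c) * s + p / q ^ 3) / (S * S * S)))
   as [c [hc ec]].
- intros y hy. rewrite Rmin_left, Rmax_right in hy by lra.
  destruct (Hder y) as [? [? [? ?]]]. destruct (Hsol y ltac:(lra)) as [_ [e1 e2]].
  pose proof (Hst y ltac:(lra)). pose proof (sqrt_pos (x1 y ^ 2 + x2 y ^ 2)).
  apply (Wderiv x1 x2 (D (x1 y) (x2 y)) y); auto; try (apply Hr; lra). unfold s in *.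
  assert (0 < 2 / sqrt (x1 y ^ 2 + x2 y ^ 2)).
  { apply Rdiv_lt_0_compat; [lra|]. apply sqrt_lt_R0. apply Hr; lra. }
  nra.
- intros y hy. rewrite Rmin_left, Rmax_right in hy by lra.
  destruct (Hder y) as [? [? [? ?]]]. destruct (Hsol y ltac:(lra)) as [nz [e1 e2]].
  pose proof (Hst y ltac:(lra)).
  apply continuity_pt_filterlim. apply (@ex_derive_continuous R_AbsRing R_NormedModule).
  eexists. apply (Wderiv x1 x2 (D (x1 y) (x2 y)) y); auto; try (apply Hr; lra). unfold s in *.
  assert (0 < 2 / sqrt (x1 y ^ 2 + x2 y ^ 2)).
  { apply Rdiv_lt_0_compat; [lra|]. apply sqrt_lt_R0. apply Hr; lra. }
  nra.
- rewrite Rmin_left, Rmax_right in hc by lra.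
  pose proof (Hst c hc) as hsc.
  assert (hq : 0 < sqrt (x1 c ^ 2 + x2 c ^ 2)) by (apply sqrt_lt_R0; apply Hr; lra).
  assert (hbS : b < sqrt (s c)).
  { rewrite <- (sqrt_pow2 b) by lra. apply sqrt_lt_1; [nra| |].
    - pose proof (pow2_ge_0 b). assert (0 < 2 / sqrt (x1 c ^ 2 + x2 c ^ 2)) by (apply Rdiv_lt_0_compat; lra). lra.
    - assert (0 < 2 / sqrt (x1 c ^ 2 + x2 c ^ 2)) by (apply Rdiv_lt_0_compat; lra). lra. }
  assert (hdf := df_bound (D (x1 c) (x2 c)) (x1 c * Derive x1 c + x2 c * Derive x2 c)
     (sqrt (x1 c ^ 2 + x2 c ^ 2)) (sqrt (s c)) (x1 c ^ 2 + x2 c ^ 2) (s c) hq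
     ltac:(lra) ltac:(apply sqrt_sqrt; apply Rlt_le, Hr; lra)
     ltac:(apply sqrt_sqrt; unfold s; nra) ltac:(pose proof (pow2_ge_0 b); lra)).
  cbv zeta in ec. unfold s in hdf. replace (0 - - T) with T in ec by ring.
  assert (key : W 0 - W (-T) >= sqrt (s c) / 2 * T).
  { rewrite ec. apply Rle_ge, Rmult_le_compat_r; unfold s in *; lra. }
  pose proof (CS_bound (x1 0) (x2 0) (Derive x1 0) (Derive x2 0)) as c0.
  pose proof (CS_bound (x1 (-T)) (x2 (-T)) (Derive x1 (-T)) (Derive x2 (-T))) as c1.
  rewrite HB in c0. rewrite HA in c1.
  assert (p0 : 0 < Derive x1 0 ^ 2 + Derive x2 0 ^ 2) by (unfold s in hs0; pose proof (pow2_ge_0 b); lra).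
  assert (p1 : 0 < Derive x1 (-T) ^ 2 + Derive x2 (-T) ^ 2).
  { pose proof (Hst (-T) ltac:(lra)). assert (0 < 2 / sqrt (x1 (-T) ^ 2 + x2 (-T) ^ 2)).
    { apply Rdiv_lt_0_compat; [lra|]. apply sqrt_lt_R0. apply Hr; lra. }
    unfold s in *. nra. }
  specialize (c0 p0). specialize (c1 p1).
  apply Rabs_le_between in c0. apply Rabs_le_between in c1.
  unfold W in key.
  assert (bT : b * T = 2 * (rA + rB)) by (unfold b; field; lra).
  assert (sqrt (s c) / 2 * T > b * T / 2) by nra.
  nra.
Qed.
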